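(* Let $m_1,\dots,m_r,n$ be positive integers and $m=\sum_{i=1}^r m_i$. If $K_{m_1,\dots,m_r}\times K_n$ is equitably $k$-colorable for some positive integer $k<\lceil mn/(m+1)\rceil$, then $K_{m_1 n,\dots,m_r n}$ is also equitably $k$-colorable.
   Context: All graphs are finite, simple and undirected. A (proper) $k$-coloring of $G$ is a map $f:V(G)\to\{1,\dots,k\}$ with $f(x)\ne f(y)$ whenever $xy\in E(G)$; an equitable $k$-coloring is a $k$-coloring in which any two color classes $f^{-1}(i)$ differ in size by at most $1$; $G$ is equitably $k$-colorable if it has one. $K_{a_1,\dots,a_r}$ denotes the complete multipartite graph with parts of sizes $a_1,\dots,a_r$; $K_n$ is the complete graph on $n$ vertices. The Kronecker product $G\times H$ has vertex set $V(G)\times V(H)$, with $(x,y)$ adjacent to $(x',y')$ iff $xx'\in E(G)$ and $yy'\in E(H)$. *)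

(* Defs.v *)
From mathcomp Require Import all_boot.
Set Implicit Arguments. Unset Strict Implicit. Unset Printing Implicit Defensive.

Definition proper_coloring (T : finType) (adj : rel T) (k : nat) (f : T -> 'I_k) : Prop :=
  forall x y : T, adj x y -> f x != f y.

Definition equitable (T : finType) (k : nat) (f : T -> 'I_k) : Prop :=
  forall i j : 'I_k, #|[set x | f x == i]| <= #|[set x | f x == j]|.+1.

Definition equitably_colorable (T : finType) (adj : rel T) (k : nat) : Prop :=
  exists f : T -> 'I_k, proper_coloring adj f /\ equitable f.

(* Complete multipartite graph K_{a_1,...,a_r}: vertices (i, j) with j < a i,
   adjacent iff they lie in different parts. *)
Definition multipartite_vertex (r : nat) (a : 'I_r -> nat) : finType :=
  {i : 'I_r & 'I_(a i)}.

Definition multipartite_adj (r : nat) (a : 'I_r -> nat) : rel (multipartite_vertex a) :=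
  fun x y => tag x != tag y.

Definition complete_adj (n : nat) : rel 'I_n := fun x y => x != y.

Definition kron_adj (T U : finType) (e1 : rel T) (e2 : rel U) : rel (T * U)%type :=
  fun x y => e1 x.1 y.1 && e2 x.2 y.2.

(* Main.v *)
Require Import Defs.
From mathcomp Require Import all_boot.
From mathcomp Require Import zify.

Section Aux.
Variables (r n : nat) (m : 'I_r -> nat) (npos : 0 < n).

Lemma lt1 i (t : 'I_(m i * n)) : t %/ n < m i.
Proof. by rewrite ltn_divLR. Qed.

Lemma lt2 i (a : 'I_(m i)) (j : 'I_n) : a * n + j < m i * n.
Proof. have := ltn_ord a; have := ltn_ord j; nia. Qed.

Definition gv (x : multipartite_vertex (fun i => m i * n)) :
  (multipartite_vertex m * 'I_n)%type :=
  let: existT i t := x in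
  (existT (fun i => 'I_(m i)) i (Ordinal (lt1 i t)), Ordinal (ltn_pmod t npos)).

Definition hv (y : (multipartite_vertex m * 'I_n)%type) :
  multipartite_vertex (fun i => m i * n) :=
  let: (existT i a, j) := y in
  existT (fun i => 'I_(m i * n)) i (Ordinal (@lt2 i a j)).

Lemma hvK : cancel hv gv.
Proof.
case=> [[i a] j] /=; congr (_, _).
  congr existT; apply: val_inj => /=.
  by rewrite divnMDl // divn_small ?addn0.
by apply: val_inj => /=; rewrite modnMDl modn_small.
Qed.

Lemma gvK : cancel gv hv.
Proof.
case=> [i t] /=; congr existT; apply: val_inj => /=.
by rewrite -divn_eq.
Qed.

Lemma tag_gv x : tag (gv x).1 = tag x.
Proof. by case: x. Qed.

Lemma card_mv : #|{: multipartite_vertex m}| = \sum_(i < r) m i.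
Proof.
rewrite /multipartite_vertex card_tagged sumnE big_map big_enum /=.
by apply: eq_bigr => i _; rewrite card_ord.
Qed.

End Aux.

Theorem lemma3p1 (r n k : nat) (m : 'I_r -> nat) :
  0 < r -> (forall i, 0 < m i) -> 0 < n -> 0 < k ->
  let M := \sum_(i < r) m i in
  (* k < ceil (M n / (M+1)) *)
  k < (M * n + M) %/ (M + 1) ->
  equitably_colorable
    (kron_adj (@multipartite_adj r m) (@complete_adj n)) k ->
  equitably_colorable (@multipartite_adj r (fun i => m i * n)) k.
Proof.
move=> r0 mpos npos k0 M hk [f [fp feq]].
set V1 := (multipartite_vertex m * 'I_n)%type.
have hsum : \sum_(c < k) #|[set x : V1 | f x == c]| = M * n.
  have -> : M * n = #|{: V1}| by rewrite card_prod card_mv card_ord.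
  rewrite -sum1_card (partition_big f xpredT) //.
  apply: eq_bigr => c _; rewrite -sum1_card; apply: eq_bigl => x.
  by rewrite inE.
have big : forall c, M < #|[set x : V1 | f x == c]|.
  move=> c0; rewrite ltnNge; apply/negP => hc0.
  have : M * n <= k * M.+1.
    rewrite -hsum; have -> : k * M.+1 = \sum_(c < k) M.+1 by rewrite sum_nat_const card_ord.
    apply: leq_sum => c _; apply: leq_trans (feq c c0) _; by [].
  move: hk; rewrite leq_divRL ?addn1 // => hk hle.
  nia.
have same : forall u v : V1, f u = f v -> tag u.1 = tag v.1.
  move=> u v fuv; apply/eqP; apply/negPn/negP => tuv.
  have e2 : u.2 = v.2.
    apply/eqP; apply/negPn/negP => h2.
    by have := fp u v; rewrite /kron_adj /= /multipartite_adj /complete_adj tuv h2 fuv eqxx => /(_ isT).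
  have sub : [set x : V1 | f x == f u] \subset [set (y, u.2) | y : multipartite_vertex m].
    apply/subsetP => w; rewrite inE => /eqP fw.
    case: (eqVneq w.2 u.2) => h.
      by apply/imsetP; exists w.1 => //; case: w fw h => a b /= _ ->.
    exfalso.
    case: (eqVneq (tag u.1) (tag w.1)) => t1.
      have := fp v w; rewrite /kron_adj /= /multipartite_adj /complete_adj -t1 eq_sym tuv.
      by rewrite -e2 eq_sym h fw fuv eqxx => /(_ isT).
    have := fp u w; rewrite /kron_adj /= /multipartite_adj /complete_adj t1.
    by rewrite eq_sym h fw eqxx => /(_ isT).
  have := big (f u); rewrite ltnNge => /negP; apply.
  apply: leq_trans (subset_leq_card sub) _.
  apply: leq_trans (leq_imset_card _ _) _.
  by rewrite /M -card_mv max_card.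
exists (fun x => f (gv r n m npos x)); split.
  move=> x y; rewrite /multipartite_adj => hxy; apply/negP => /eqP e.
  by move: hxy; rewrite -!(tag_gv r n m npos) (same _ _ e) eqxx.
move=> i j.
have cc : forall c, #|[set x | f (gv r n m npos x) == c]| = #|[set x : V1 | f x == c]|.
  move=> c.
  have -> : [set x | f (gv r n m npos x) == c] = gv r n m npos @^-1: [set x : V1 | f x == c].
    by apply/setP => x; rewrite !inE.
  rewrite -(can2_imset_pre _ (hvK r n m npos) (gvK r n m npos)) card_imset //.
  exact: can_inj (hvK r n m npos).
by rewrite !cc.
Qed.
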